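(* Assume in addition $1\le M\le N/2$. For every $y$ such that either ($Py\equiv0\pmod N$ and $y\ne0$) or ($Py\not\equiv0\pmod N$ and $MPy\not\equiv0\pmod N$), one has $$\frac{N}{4M}\cdot\frac{N}{N-M}\;\ge\;\frac{\Pr_{\mathrm{Amp}}(y)}{\Pr_{\mathrm{QFT}}(y)}\;\ge\;\frac{N}{4M}\cdot\frac{N}{N-M}\Big(1-\frac{2M}{N}\Big)^2,\qquad \frac{N}{2M}\cdot\frac{N}{N-M}\;\ge\;\frac{\Pr_{\mathrm{Amp}}(y)}{\Pr_{\mathrm{QHS}}(y)}\;\ge\;\frac{N}{2M}\cdot\frac{N}{N-M}\Big(1-\frac{2M}{N}\Big)^2,$$ and in fact $\Pr_{\mathrm{Amp}}(y)/\Pr_{\mathrm{QFT}}(y)=\frac{N^2}{4M^2}\tan^2\theta\sin^2(2k\theta)$ and $\Pr_{\mathrm{Amp}}(y)/\Pr_{\mathrm{QHS}}(y)=\frac{N^2}{2M^2}\tan^2\theta\sin^2(2k\theta)$. Consequently, for any nonempty set $S$ of such $y$, the same two chains of inequalities hold with $\Pr(y)$ replaced by $\Pr(S)=\sum_{y\in S}\Pr(y)$ for each algorithm.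
   Context: Setting: $N\ge 2$, $\mathcal L=\{0,\dots,N-1\}$, integers $s\ge0,P\ge1,M\ge1$ with $M<N$ and $s+(M-1)P\le N-1$; $A=\{s+rP:r=0,\dots,M-1\}$; $\omega=e^{-2\pi i/N}$; $f=\mathbf 1_A$. Let $\sin\theta=\sqrt{M/N}$, $\theta\in(0,\pi/2)$, $k=\lfloor\pi/(4\theta)\rfloor$, $a_k=\frac{\sin((2k+1)\theta)}{\sqrt M}$, $b_k=\frac{\cos((2k+1)\theta)}{\sqrt{N-M}}$. Define $\Pr_{\mathrm{Amp}}(y)=\big|\frac1{\sqrt N}\sum_z\psi_k(z)\omega^{zy}\big|^2$ where $\psi_k=a_k$ on $A$ and $b_k$ off $A$; $\Pr_{\mathrm{QFT}}(y)=\big|\frac1N\sum_z(-1)^{f(z)}\omega^{zy}\big|^2$; $\Pr_{\mathrm{QHS}}(y)=\frac1{N^2}\big|\sum_{x\in A}\omega^{xy}\big|^2+\frac1{N^2}\big|\sum_{x\notin A}\omega^{xy}\big|^2$. *)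

(* Defs.v *)
From Stdlib Require Import Reals Lra Lia ZArith Arith List.
Open Scope R_scope.

Definition lsum (l : list nat) (f : nat -> R) : R :=
  fold_right Rplus 0 (map f l).

Definition Lset (N : nat) : list nat := seq 0 N.

Definition inA (s P M z : nat) : bool :=
  existsb (fun r => Nat.eqb z (s + r * P)%nat) (seq 0 M).

(* Real and imaginary parts of sum_{z in l} c z * omega^(z y),
   omega = exp(-2 pi i / N), c real-valued. *)
Definition dftRe (N : nat) (l : list nat) (c : nat -> R) (y : nat) : R :=
  lsum l (fun z => c z * cos (2 * PI * INR z * INR y / INR N)).
Definition dftIm (N : nat) (l : list nat) (c : nat -> R) (y : nat) : R :=
  lsum l (fun z => c z * (- sin (2 * PI * INR z * INR y / INR N))).
Definition sqnorm_dft (N : nat) (l : list nat) (c : nat -> R) (y : nat) : R :=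
  (dftRe N l c y) ^ 2 + (dftIm N l c y) ^ 2.

Definition theta (N M : nat) : R := asin (sqrt (INR M / INR N)).
Definition kk (N M : nat) : Z := Int_part (PI / (4 * theta N M)).
Definition a_k (N M : nat) : R :=
  sin ((2 * IZR (kk N M) + 1) * theta N M) / sqrt (INR M).
Definition b_k (N M : nat) : R :=
  cos ((2 * IZR (kk N M) + 1) * theta N M) / sqrt (INR N - INR M).
Definition psi_k (N s P M : nat) (z : nat) : R :=
  if inA s P M z then a_k N M else b_k N M.

Definition PrAmp (N s P M y : nat) : R :=
  (dftRe N (Lset N) (psi_k N s P M) y / sqrt (INR N)) ^ 2
  + (dftIm N (Lset N) (psi_k N s P M) y / sqrt (INR N)) ^ 2.

Definition PrQFT (N s P M y : nat) : R :=
  (dftRe N (Lset N) (fun z => if inA s P M z then -1 else 1) y / INR N) ^ 2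
  + (dftIm N (Lset N) (fun z => if inA s P M z then -1 else 1) y / INR N) ^ 2.

Definition PrQHS (N s P M y : nat) : R :=
  / (INR N) ^ 2 * sqnorm_dft N (filter (inA s P M) (Lset N)) (fun _ => 1) y
  + / (INR N) ^ 2
      * sqnorm_dft N (filter (fun z => negb (inA s P M z)) (Lset N)) (fun _ => 1) y.

Definition PrSet (Pr : nat -> R) (S : list nat) : R := lsum S Pr.

Definition good_y (N P M y : nat) : Prop :=
  ((P * y) mod N = 0 /\ y <> 0)%nat \/
  ((P * y) mod N <> 0 /\ (M * P * y) mod N <> 0)%nat.

(* Main.v *)
Require Import Defs.
From Stdlib Require Import Reals Lra Lia ZArith Arith List.
Open Scope R_scope.

Lemma lsum_app l1 l2 f : lsum (l1++l2) f = lsum l1 f + lsum l2 f.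
Proof. unfold lsum. induction l1; simpl; [ring | rewrite IHl1; ring]. Qed.

Lemma lsum_ext l f g : (forall x, In x l -> f x = g x) -> lsum l f = lsum l g.
Proof. unfold lsum. induction l; simpl; intros H; auto.
  rewrite H by auto. rewrite IHl; auto. Qed.

Lemma lsum_scal l c f : lsum l (fun z => c * f z) = c * lsum l f.
Proof. unfold lsum. induction l; simpl; [ring | rewrite IHl; ring]. Qed.

Lemma lsum_opp l f : lsum l (fun z => - f z) = - lsum l f.
Proof. unfold lsum. induction l; simpl; [ring | rewrite IHl; ring]. Qed.

Lemma lsum_plus l f g : lsum l (fun z => f z + g z) = lsum l f + lsum l g.
Proof. unfold lsum. induction l; simpl; [ring | rewrite IHl; ring]. Qed.

Lemma lsum_const l c : lsum l (fun _ => c) = INR (length l) * c.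
Proof. unfold lsum. induction l; simpl length; [simpl; ring | rewrite S_INR; simpl; rewrite IHl; ring]. Qed.

Lemma lsum_one l f : lsum l (fun z => 1 * f z) = lsum l f.
Proof. rewrite lsum_scal; ring. Qed.

Lemma lsum_if l (p : nat -> bool) a b g :
  lsum l (fun z => (if p z then a else b) * g z) =
  a * lsum (filter p l) g + b * lsum (filter (fun z => negb (p z)) l) g.
Proof. unfold lsum. induction l as [|x l IH]; simpl; [ring|].
  destruct (p x); simpl; rewrite IH; ring. Qed.

Lemma lsum_split l (p : nat -> bool) g :
  lsum (filter p l) g + lsum (filter (fun z => negb (p z)) l) g = lsum l g.
Proof. unfold lsum. induction l as [|x l IH]; simpl; [ring|].
  destruct (p x); simpl; rewrite <- IH; ring. Qed.

Lemma lsum_filter l (p : nat -> bool) g :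
  lsum (filter p l) g = lsum l (fun z => if p z then g z else 0).
Proof. unfold lsum. induction l as [|x l IH]; simpl; [ring|].
  destruct (p x); simpl; rewrite IH; ring. Qed.

Lemma lsum_point t n g : (t < n)%nat ->
  lsum (seq 0 n) (fun z => if Nat.eqb z t then g z else 0) = g t.
Proof.
  induction n; intros H; [lia|].
  rewrite seq_S, lsum_app. simpl (0 + n)%nat.
  destruct (Nat.eq_dec t n) as [->|Hne].
  - rewrite (lsum_ext _ _ (fun _ => 0)).
    + rewrite lsum_const. unfold lsum; simpl. rewrite Nat.eqb_refl. ring.
    + intros x Hx. apply in_seq in Hx. destruct (Nat.eqb_spec x n); [lia|auto].
  - rewrite IHn by lia. unfold lsum; simpl.
    destruct (Nat.eqb_spec n t); [lia|ring].
Qed.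

Lemma inA_S s P M z : inA s P (S M) z = (inA s P M z || Nat.eqb z (s + M*P))%bool.
Proof. unfold inA. rewrite seq_S, existsb_app. simpl. rewrite Bool.orb_false_r. reflexivity. Qed.

Lemma inA_lt s P M z : (1 <= P)%nat -> inA s P M z = true -> (z < s + M*P)%nat.
Proof. intros HP H. unfold inA in H. apply existsb_exists in H.
  destruct H as [r [Hr Hz]]. apply in_seq in Hr. apply Nat.eqb_eq in Hz. nia. Qed.

Lemma lsum_A s P N g : (1 <= P)%nat -> forall M,
  (forall r, (r < M)%nat -> (s + r*P < N)%nat) ->
  lsum (seq 0 N) (fun z => if inA s P M z then g z else 0)
  = lsum (seq 0 M) (fun r => g (s + r*P)%nat).
Proof.
  intros HP. induction M; intros H.
  - rewrite (lsum_ext _ _ (fun _ => 0)). rewrite lsum_const. unfold lsum; simpl; ring.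
    intros; reflexivity.
  - rewrite (lsum_ext _ _ (fun z => (if inA s P M z then g z else 0) +
        (if Nat.eqb z (s + M*P) then g z else 0))).
    + rewrite lsum_plus, IHM by (intros; apply H; lia).
      rewrite lsum_point by (apply H; lia).
      rewrite seq_S, lsum_app. unfold lsum; simpl. ring.
    + intros x _. rewrite inA_S. destruct (inA s P M x) eqn:E; simpl.
      * apply inA_lt in E; auto. destruct (Nat.eqb_spec x (s + M*P)); [lia|ring].
      * ring.
Qed.

Lemma tele_cos th h M : 2 * sin h * lsum (seq 0 M) (fun r => cos (th + INR r * (2*h)))
  = sin (th + INR M * (2*h) - h) - sin (th - h).
Proof.
  induction M.
  - unfold lsum; simpl. replace (th + 0 * (2*h) - h) with (th - h) by ring. ring.
  - rewrite seq_S, lsum_app, Rmult_plus_distr_l, IHM, S_INR. unfold lsum. simpl.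
    replace (th + (INR M + 1) * (2*h) - h) with ((th + INR M * (2*h)) + h) by ring.
    replace (th + INR M * (2*h) - h) with ((th + INR M * (2*h)) - h) by ring.
    rewrite sin_plus, sin_minus. ring.
Qed.

Lemma tele_sin th h M : 2 * sin h * lsum (seq 0 M) (fun r => sin (th + INR r * (2*h)))
  = cos (th - h) - cos (th + INR M * (2*h) - h).
Proof.
  induction M.
  - unfold lsum; simpl. replace (th + 0 * (2*h) - h) with (th - h) by ring. ring.
  - rewrite seq_S, lsum_app, Rmult_plus_distr_l, IHM, S_INR. unfold lsum. simpl.
    replace (th + (INR M + 1) * (2*h) - h) with ((th + INR M * (2*h)) + h) by ring.
    replace (th + INR M * (2*h) - h) with ((th + INR M * (2*h)) - h) by ring.
    rewrite cos_plus, (cos_minus (th + INR M * (2*h)) h). ring.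
Qed.

Lemma INRpos n : (0 < n)%nat -> 0 < INR n.
Proof. intros; apply lt_0_INR; lia. Qed.

Lemma fullsum (N y : nat) : (0 < y)%nat -> (y < N)%nat ->
  lsum (seq 0 N) (fun z => cos (2 * PI * INR z * INR y / INR N)) = 0 /\
  lsum (seq 0 N) (fun z => sin (2 * PI * INR z * INR y / INR N)) = 0.
Proof.
  intros Hy HN.
  assert (HNp : 0 < INR N) by (apply INRpos; lia).
  assert (Hyp : 0 < INR y) by (apply INRpos; lia).
  assert (HyN : INR y < INR N) by (apply lt_INR; lia).
  pose (h := PI * INR y / INR N).
  assert (Hs : 0 < sin h).
  { apply sin_gt_0; unfold h.
    - apply Rdiv_lt_0_compat; [apply Rmult_lt_0_compat; [apply PI_RGT_0|]|]; lra.
    - apply Rmult_lt_reg_r with (INR N); auto. unfold Rdiv. rewrite Rmult_assoc, Rinv_l by lra.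
      pose proof PI_RGT_0. nra. }
  assert (Hh : forall z, 2 * PI * INR z * INR y / INR N = 0 + INR z * (2*h)).
  { intros z; unfold h; field; lra. }
  assert (Hend : 0 + INR N * (2*h) - h = - h + 2 * INR y * PI).
  { unfold h; field; lra. }
  split.
  - rewrite (lsum_ext _ _ (fun z => cos (0 + INR z * (2*h)))) by (intros; rewrite Hh; auto).
    pose proof (tele_cos 0 h N) as T. rewrite Hend, sin_period in T.
    replace (0 - h) with (-h) in T by ring. rewrite sin_neg in T.
    apply Rmult_eq_reg_l with (2 * sin h); [|lra]. lra.
  - rewrite (lsum_ext _ _ (fun z => sin (0 + INR z * (2*h)))) by (intros; rewrite Hh; auto).
    pose proof (tele_sin 0 h N) as T. rewrite Hend, cos_period in T.
    replace (0 - h) with (-h) in T by ring.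
    apply Rmult_eq_reg_l with (2 * sin h); [|lra]. lra.
Qed.

Lemma cos_lt1 (N m : nat) : (0 < N)%nat -> (m mod N <> 0)%nat ->
  cos (2 * PI * INR m / INR N) < 1.
Proof.
  intros HN Hm.
  assert (HNp : 0 < INR N) by (apply INRpos; lia).
  pose proof (Nat.div_mod m N ltac:(lia)) as E.
  pose proof (Nat.mod_upper_bound m N ltac:(lia)) as Hr.
  set (q := (m / N)%nat) in *. set (r := (m mod N)%nat) in *.
  assert (Hrp : 0 < INR r) by (apply INRpos; lia).
  assert (HrN : INR r < INR N) by (apply lt_INR; lia).
  replace (2 * PI * INR m / INR N) with (2 * (PI * INR r / INR N) + 2 * INR q * PI).
  2:{ rewrite E, plus_INR, mult_INR. field. lra. }
  rewrite cos_period, cos_2a_sin.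
  assert (0 < sin (PI * INR r / INR N)).
  { apply sin_gt_0.
    - apply Rdiv_lt_0_compat; [apply Rmult_lt_0_compat; [apply PI_RGT_0|]|]; lra.
    - apply Rmult_lt_reg_r with (INR N); auto. unfold Rdiv. rewrite Rmult_assoc, Rinv_l by lra.
      pose proof PI_RGT_0. nra. }
  nra.
Qed.

Lemma geom_pos (N s P M y : nat) : (0 < N)%nat -> (1 <= M)%nat ->
  ((P * y) mod N = 0 \/ (M * P * y) mod N <> 0)%nat ->
  let X := lsum (seq 0 M) (fun r => cos (2 * PI * INR (s + r*P) * INR y / INR N)) in
  let Y := lsum (seq 0 M) (fun r => - sin (2 * PI * INR (s + r*P) * INR y / INR N)) in
  0 < X ^ 2 + Y ^ 2.
Proof.
  intros HN HM Hc X Y.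
  assert (HNp : 0 < INR N) by (apply INRpos; lia).
  pose (th := 2 * PI * INR s * INR y / INR N).
  pose (h := PI * INR P * INR y / INR N).
  assert (Hh : forall r, 2 * PI * INR (s + r*P) * INR y / INR N = th + INR r * (2*h)).
  { intros r; unfold th, h; rewrite plus_INR, mult_INR; field; lra. }
  unfold Y; rewrite lsum_opp. fold Y.
  unfold X, Y.
  rewrite (lsum_ext _ (fun r => cos _) (fun r => cos (th + INR r * (2*h)))) by (intros; rewrite Hh; auto).
  rewrite (lsum_ext _ (fun r => sin _) (fun r => sin (th + INR r * (2*h)))) by (intros; rewrite Hh; auto).
  destruct Hc as [Hc|Hc].
  - pose proof (Nat.div_mod (P*y) N ltac:(lia)) as E. rewrite Hc, Nat.add_0_r in E.
    set (q := ((P*y)/N)%nat) in *.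
    assert (Hq : 2 * h = 2 * INR q * PI).
    { unfold h. rewrite Rmult_assoc, <- mult_INR, E, mult_INR. field; lra. }
    rewrite (lsum_ext _ _ (fun _ => cos th)).
    2:{ intros r _. rewrite Hq. replace (INR r * (2 * INR q * PI)) with (2 * INR (r*q) * PI)
         by (rewrite mult_INR; ring). apply cos_period. }
    rewrite (lsum_ext _ (fun r => sin _) (fun _ => sin th)).
    2:{ intros r _. rewrite Hq. replace (INR r * (2 * INR q * PI)) with (2 * INR (r*q) * PI)
         by (rewrite mult_INR; ring). apply sin_period. }
    rewrite !lsum_const, length_seq.
    assert (HMp : 0 < INR M) by (apply INRpos; lia).
    pose proof (sin2_cos2 th). unfold Rsqr in *. nra.
  - pose proof (tele_cos th h M) as T1. pose proof (tele_sin th h M) as T2.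
    set (C := lsum (seq 0 M) (fun r => cos (th + INR r * (2*h)))) in *.
    set (S := lsum (seq 0 M) (fun r => sin (th + INR r * (2*h)))) in *.
    set (u := th + INR M * (2*h) - h) in *. set (v := th - h) in *.
    assert (Huv : u - v = 2 * PI * INR (M*P*y) / INR N).
    { unfold u, v, h. rewrite !mult_INR. field. lra. }
    pose proof (cos_lt1 N (M*P*y) HN Hc) as Hl. rewrite <- Huv, cos_minus in Hl.
    pose proof (sin2_cos2 u). pose proof (sin2_cos2 v). unfold Rsqr in *.
    assert (E : (2 * sin h)^2 * (C^2 + (-S)^2) = 2 - 2 * (cos u * cos v + sin u * sin v)).
    { replace ((2 * sin h)^2 * (C^2 + (-S)^2)) with ((2 * sin h * C)^2 + (2 * sin h * S)^2) by ring.
      rewrite T1, T2. nra. }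
    destruct (Rlt_or_le 0 (C^2 + (-S)^2)) as [|Hle]; auto.
    assert (C^2 + (-S)^2 = 0) by nra. rewrite H1 in E. nra.
Qed.

Lemma key_y (N s P M y : nat) (hN : (2 <= N)%nat) (hP : (1 <= P)%nat) (hM1 : (1 <= M)%nat)
  (hA : (s + (M - 1) * P <= N - 1)%nat) (hy : (y < N)%nat) (hg : good_y N P M y) :
  exists Q, 0 < Q /\
    PrAmp N s P M y = (a_k N M - b_k N M)^2 * Q / INR N /\
    PrQFT N s P M y = 4 * Q / INR N ^ 2 /\
    PrQHS N s P M y = 2 * Q / INR N ^ 2.
Proof.
  assert (HNp : 0 < INR N) by (apply INRpos; lia).
  assert (Hy0 : (0 < y)%nat).
  { destruct hg as [[_ H]|[H _]]; [lia|]. destruct y; [|lia]. rewrite Nat.mul_0_r in H.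
    rewrite Nat.mod_0_l in H; lia. }
  destruct (fullsum N y Hy0 hy) as [F1 F2].
  set (g1 := fun z => cos (2 * PI * INR z * INR y / INR N)).
  set (g2 := fun z => - sin (2 * PI * INR z * INR y / INR N)).
  set (pA := inA s P M).
  set (X := lsum (filter pA (Lset N)) g1).
  set (Y := lsum (filter pA (Lset N)) g2).
  assert (Xc : lsum (filter (fun z => negb (pA z)) (Lset N)) g1 = - X).
  { pose proof (lsum_split (Lset N) pA g1) as H. fold X in H.
    change (lsum (Lset N) g1) with (lsum (seq 0 N) (fun z => cos (2 * PI * INR z * INR y / INR N))) in H.
    rewrite F1 in H. lra. }
  assert (Yc : lsum (filter (fun z => negb (pA z)) (Lset N)) g2 = - Y).
  { pose proof (lsum_split (Lset N) pA g2) as H. fold Y in H.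
    change (lsum (Lset N) g2) with (lsum (seq 0 N) (fun z => - sin (2 * PI * INR z * INR y / INR N))) in H.
    rewrite lsum_opp, F2 in H. lra. }
  assert (HQ : 0 < X^2 + Y^2).
  { unfold X, Y. rewrite !lsum_filter. unfold Lset. unfold pA.
    rewrite !(lsum_A s P N _ hP M) by (intros; nia).
    apply geom_pos; try lia.
    destruct hg as [[H _]|[_ H]]; auto. }
  exists (X^2 + Y^2). split; auto.
  assert (HsN : sqrt (INR N) ^ 2 = INR N) by (apply pow2_sqrt; lra).
  assert (HsNp : 0 < sqrt (INR N)) by (apply sqrt_lt_R0; lra).
  assert (R1 : dftRe N (Lset N) (psi_k N s P M) y = a_k N M * X + b_k N M * (-X)).
  { rewrite <- Xc. exact (lsum_if (Lset N) pA (a_k N M) (b_k N M) g1). }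
  assert (R2 : dftIm N (Lset N) (psi_k N s P M) y = a_k N M * Y + b_k N M * (-Y)).
  { rewrite <- Yc. exact (lsum_if (Lset N) pA (a_k N M) (b_k N M) g2). }
  assert (R3 : dftRe N (Lset N) (fun z => if inA s P M z then -1 else 1) y = -1 * X + 1 * (-X)).
  { rewrite <- Xc. exact (lsum_if (Lset N) pA (-1) 1 g1). }
  assert (R4 : dftIm N (Lset N) (fun z => if inA s P M z then -1 else 1) y = -1 * Y + 1 * (-Y)).
  { rewrite <- Yc. exact (lsum_if (Lset N) pA (-1) 1 g2). }
  assert (R5 : sqnorm_dft N (filter (inA s P M) (Lset N)) (fun _ => 1) y = X^2 + Y^2).
  { unfold sqnorm_dft, dftRe, dftIm. rewrite !lsum_one. reflexivity. }
  assert (R6 : sqnorm_dft N (filter (fun z => negb (inA s P M z)) (Lset N)) (fun _ => 1) y = (-X)^2 + (-Y)^2).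
  { unfold sqnorm_dft, dftRe, dftIm. rewrite !lsum_one. rewrite <- Xc, <- Yc. reflexivity. }
  split; [|split].
  - unfold PrAmp. rewrite R1, R2.
    transitivity ((a_k N M - b_k N M)^2 * (X^2+Y^2) / (sqrt (INR N))^2); [field; lra | rewrite HsN; reflexivity].
  - unfold PrQFT. rewrite R3, R4. field. lra.
  - unfold PrQHS. rewrite R5, R6. field. lra.
Qed.

Lemma trig (N M : nat) (hM1 : (1 <= M)%nat) (hMN : (M < N)%nat) (hM2 : (2 * M <= N)%nat) :
  let t := theta N M in let K := IZR (kk N M) in
  let c := INR N / (4 * INR M) * (INR N / (INR N - INR M)) in
  let e := (1 - 2 * INR M / INR N) ^ 2 in
  INR N * (a_k N M - b_k N M)^2 / 4 = INR N ^ 2 / (4 * INR M ^ 2) * (tan t) ^ 2 * (sin (2 * K * t)) ^ 2 /\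
  INR N * (a_k N M - b_k N M)^2 / 4 = c * (sin (2 * K * t)) ^ 2 /\
  e <= (sin (2 * K * t)) ^ 2 <= 1 /\ 0 < c.
Proof.
  intros t K c e.
  assert (HN : 0 < INR N) by (apply lt_0_INR; lia).
  assert (HM : 0 < INR M) by (apply lt_0_INR; lia).
  assert (HMNr : INR M < INR N) by (apply lt_INR; lia).
  assert (HM2r : 2 * INR M <= INR N).
  { replace 2 with (INR 2) by reflexivity. rewrite <- mult_INR. apply le_INR; lia. }
  assert (Hx : -1 <= sqrt (INR M / INR N) <= 1).
  { split.
    - pose proof (sqrt_pos (INR M / INR N)); lra.
    - rewrite <- sqrt_1. apply sqrt_le_1_alt.
      apply Rmult_le_reg_r with (INR N); auto. unfold Rdiv. rewrite Rmult_assoc, Rinv_l by lra. lra. }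
  assert (Hsin : sin t = sqrt (INR M) / sqrt (INR N)).
  { unfold t, theta. rewrite sin_asin by auto. apply sqrt_div; lra. }
  assert (Hcos : cos t = sqrt (INR N - INR M) / sqrt (INR N)).
  { unfold t, theta. rewrite cos_asin by auto. rewrite <- sqrt_div by lra. f_equal.
    unfold Rsqr. rewrite sqrt_sqrt.
    - field; lra.
    - apply Rmult_le_pos; [lra|]. left; apply Rinv_0_lt_compat; lra. }
  set (sM := sqrt (INR M)) in *. set (sN := sqrt (INR N)) in *. set (sL := sqrt (INR N - INR M)) in *.
  assert (HsM : sM ^ 2 = INR M) by (apply pow2_sqrt; lra).
  assert (HsN : sN ^ 2 = INR N) by (apply pow2_sqrt; lra).
  assert (HsL : sL ^ 2 = INR N - INR M) by (apply pow2_sqrt; lra).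
  assert (HsMp : 0 < sM) by (apply sqrt_lt_R0; lra).
  assert (HsNp : 0 < sN) by (apply sqrt_lt_R0; lra).
  assert (HsLp : 0 < sL) by (apply sqrt_lt_R0; lra).
  set (Sx := sin ((2 * K + 1) * t)). set (Cx := cos ((2 * K + 1) * t)).
  assert (H2K : sin (2 * K * t) = (Sx * sL - Cx * sM) / sN).
  { replace (2 * K * t) with ((2 * K + 1) * t - t) by ring. rewrite sin_minus.
    fold Sx Cx. rewrite Hsin, Hcos. field. lra. }
  assert (Hab : a_k N M - b_k N M = Sx / sM - Cx / sL) by reflexivity.
  assert (Htan : tan t = sM / sL).
  { unfold tan. rewrite Hsin, Hcos. field. split; lra. }
  assert (Hc : 0 < c).
  { unfold c. apply Rmult_lt_0_compat; apply Rdiv_lt_0_compat; lra. }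
  split; [|split; [|split]]; auto.
  - rewrite Hab, Htan, H2K. rewrite <- HsN, <- HsM. field. lra.
  - rewrite Hab, H2K. unfold c. rewrite <- HsL. rewrite <- HsN, <- HsM. field. lra.
  -
    pose proof (SIN_bound (2 * K * t)) as Hb.
    split; [|nra].
    assert (Hst : sin t * sin t = INR M / INR N).
    { unfold t, theta. rewrite sin_asin by auto. apply sqrt_sqrt.
      apply Rmult_le_pos; [lra|]. left; apply Rinv_0_lt_compat; lra. }
    assert (He : e = (cos (2 * t)) ^ 2).
    { unfold e. rewrite cos_2a_sin, Rmult_assoc, Hst. unfold Rdiv. ring. }
    assert (Hc2 : 0 <= cos (2 * t)).
    { rewrite cos_2a_sin, Rmult_assoc, Hst.
      apply Rmult_le_reg_r with (INR N); auto.
      replace ((1 - 2 * (INR M / INR N)) * INR N) with (INR N - 2 * INR M) by (field; lra). lra. }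
    pose proof PI_RGT_0 as Hpi.
    assert (Hab2 : -(PI/2) <= t <= PI/2) by (unfold t, theta; apply asin_bound).
    assert (Ht0 : 0 < t).
    { destruct (Rlt_or_le 0 t) as [|Hle]; auto.
      assert (0 <= sin (- t)) by (apply sin_ge_0; lra).
      rewrite sin_neg, Hsin in H.
      assert (0 < sM / sN) by (apply Rdiv_lt_0_compat; lra). lra. }
    assert (Ht4 : 2 * t <= PI / 2).
    { destruct (Rle_or_lt (2 * t) (PI / 2)) as [|Hlt]; auto.
      assert (cos (2 * t) < 0) by (apply cos_lt_0; lra). lra. }
    destruct (base_Int_part (PI / (4 * t))) as [Hk1 Hk2].
    change (IZR (Int_part (PI / (4 * t)))) with K in Hk1, Hk2.
    assert (Hk3 : 4 * K * t <= PI).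
    { apply Rmult_le_compat_r with (r := 4 * t) in Hk1; [|lra].
      replace (PI / (4 * t) * (4 * t)) with PI in Hk1 by (field; lra). lra. }
    assert (Hk4 : PI - 4 * t < 4 * K * t).
    { assert (K + 1 > PI / (4 * t)) by lra.
      apply Rmult_gt_compat_r with (r := 4 * t) in H; [|lra].
      replace (PI / (4 * t) * (4 * t)) with PI in H by (field; lra). lra. }
    assert (Hs : cos (2 * t) <= sin (2 * K * t)).
    { rewrite <- sin_shift. apply sin_incr_1; lra. }
    rewrite He. nra.
Qed.

Lemma lsum_pos l f : (forall x, In x l -> 0 < f x) -> l <> nil -> 0 < lsum l f.
Proof.
  induction l as [|a l IH]; intros H Hn; [congruence|].
  unfold lsum in *; simpl. destruct l as [|b l'].
  - simpl. rewrite Rplus_0_r. apply H; simpl; auto.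
  - assert (0 < f a) by (apply H; simpl; auto).
    assert (0 < fold_right Rplus 0 (map f (b :: l'))) by (apply IH; [intros; apply H; simpl; auto | congruence]).
    lra.
Qed.

Theorem mainTheorem4 (N s P M : nat)
  (hN : (2 <= N)%nat) (hP : (1 <= P)%nat) (hM1 : (1 <= M)%nat) (hMN : (M < N)%nat)
  (hA : (s + (M - 1) * P <= N - 1)%nat)
  (hM2 : (2 * M <= N)%nat) :
  let c := INR N / (4 * INR M) * (INR N / (INR N - INR M)) in
  let d := INR N / (2 * INR M) * (INR N / (INR N - INR M)) in
  let e := (1 - 2 * INR M / INR N) ^ 2 in
  (forall y : nat, (y < N)%nat -> good_y N P M y ->
     c >= PrAmp N s P M y / PrQFT N s P M y /\
     PrAmp N s P M y / PrQFT N s P M y >= c * e /\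
     d >= PrAmp N s P M y / PrQHS N s P M y /\
     PrAmp N s P M y / PrQHS N s P M y >= d * e /\
     PrAmp N s P M y / PrQFT N s P M y
       = INR N ^ 2 / (4 * INR M ^ 2) * (tan (theta N M)) ^ 2
         * (sin (2 * IZR (kk N M) * theta N M)) ^ 2 /\
     PrAmp N s P M y / PrQHS N s P M y
       = INR N ^ 2 / (2 * INR M ^ 2) * (tan (theta N M)) ^ 2
         * (sin (2 * IZR (kk N M) * theta N M)) ^ 2) /\
  (forall S : list nat, S <> nil -> NoDup S ->
     (forall y, In y S -> (y < N)%nat /\ good_y N P M y) ->
     c >= PrSet (PrAmp N s P M) S / PrSet (PrQFT N s P M) S /\
     PrSet (PrAmp N s P M) S / PrSet (PrQFT N s P M) S >= c * e /\
     d >= PrSet (PrAmp N s P M) S / PrSet (PrQHS N s P M) S /\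
     PrSet (PrAmp N s P M) S / PrSet (PrQHS N s P M) S >= d * e).
Proof.
  intros c d e.
  assert (HN : 0 < INR N) by (apply lt_0_INR; lia).
  assert (HM : 0 < INR M) by (apply lt_0_INR; lia).
  assert (HMNr : INR M < INR N) by (apply lt_INR; lia).
  destruct (trig N M hM1 hMN hM2) as [T1 [T2 [[Te1 Te2] Hc]]].
  fold c in T2, Hc. fold e in Te1.
  set (R := INR N * (a_k N M - b_k N M) ^ 2 / 4) in *.
  set (s2 := sin (2 * IZR (kk N M) * theta N M) ^ 2) in *.
  assert (Hd : d = 2 * c) by (unfold d, c; field; lra).
  assert (PY : forall y, (y < N)%nat -> good_y N P M y ->
     0 < PrQFT N s P M y /\ 0 < PrQHS N s P M y /\
     PrAmp N s P M y = R * PrQFT N s P M y /\ PrAmp N s P M y = 2 * R * PrQHS N s P M y).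
  { intros y Hy Hg. destruct (key_y N s P M y hN hP hM1 hA Hy Hg) as [Q [HQ [E1 [E2 E3]]]].
    rewrite E1, E2, E3. unfold R. repeat split.
    - apply Rdiv_lt_0_compat; [lra|]. apply pow_lt; lra.
    - apply Rdiv_lt_0_compat; [lra|]. apply pow_lt; lra.
    - field; lra.
    - field; lra. }
  assert (Hs2 : 0 <= s2) by (unfold s2; apply pow2_ge_0).
  assert (B1 : c >= R).
  { rewrite T2. nra. }
  assert (B2 : R >= c * e).
  { rewrite T2. apply Rle_ge. apply Rmult_le_compat_l; lra. }
  split.
  - intros y Hy Hg. destruct (PY y Hy Hg) as [P1 [P2 [E1 E2]]].
    assert (Q1 : PrAmp N s P M y / PrQFT N s P M y = R) by (rewrite E1; field; lra).
    assert (Q2 : PrAmp N s P M y / PrQHS N s P M y = 2 * R) by (rewrite E2; field; lra).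
    rewrite Q1, Q2, Hd. repeat split; try lra.
    all: rewrite T1; unfold s2; field; lra.
  - intros S Hn _ HS.
    assert (A1 : PrSet (PrAmp N s P M) S = R * PrSet (PrQFT N s P M) S).
    { unfold PrSet. rewrite <- lsum_scal. apply lsum_ext. intros y Hy.
      destruct (HS y Hy) as [Hy1 Hy2]. apply (PY y Hy1 Hy2). }
    assert (A2 : PrSet (PrAmp N s P M) S = 2 * R * PrSet (PrQHS N s P M) S).
    { unfold PrSet. rewrite <- lsum_scal. apply lsum_ext. intros y Hy.
      destruct (HS y Hy) as [Hy1 Hy2]. apply (PY y Hy1 Hy2). }
    assert (P1 : 0 < PrSet (PrQFT N s P M) S).
    { apply lsum_pos; auto. intros y Hy. destruct (HS y Hy) as [Hy1 Hy2]. apply (PY y Hy1 Hy2). }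
    assert (P2 : 0 < PrSet (PrQHS N s P M) S).
    { apply lsum_pos; auto. intros y Hy. destruct (HS y Hy) as [Hy1 Hy2]. apply (PY y Hy1 Hy2). }
    assert (Q1 : PrSet (PrAmp N s P M) S / PrSet (PrQFT N s P M) S = R) by (rewrite A1; field; lra).
    assert (Q2 : PrSet (PrAmp N s P M) S / PrSet (PrQHS N s P M) S = 2 * R) by (rewrite A2; field; lra).
    rewrite Q1, Q2, Hd. repeat split; lra.
Qed.
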